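(* Let $f,g\in\mathbb{H}$ be two linearly independent pure unit quaternions (so $f^2=g^2=-1$, $f\neq\pm g$). Let $h\in L^1(\mathbb{R}^2,\mathbb{H})$ and define $h_{\pm}(\mathbf{x})=\frac12\big(h(\mathbf{x})\pm f\,h(\mathbf{x})\,g\big)$. Define $$\mathcal{F}^{f,g}_{\pm}\{h\}(\boldsymbol{\omega})=\mathcal{F}^{f,g}\{h_{\pm}\}(\boldsymbol{\omega})=\int_{\mathbb{R}^2} e^{-f x_1\omega_1}\, h_{\pm}(\mathbf{x})\, e^{-g x_2\omega_2}\, d^2\mathbf{x},\qquad \boldsymbol{\omega}=(\omega_1,\omega_2)\in\mathbb{R}^2 .$$ Then $$\mathcal{F}^{f,g}_{\pm}\{h\}(\boldsymbol{\omega})=\int_{\mathbb{R}^2} h_{\pm}(\mathbf{x})\,e^{-g(x_2\omega_2\mp x_1\omega_1)}\,d^2\mathbf{x}=\int_{\mathbb{R}^2} e^{-f(x_1\omega_1\mp x_2\omega_2)}\,h_{\pm}(\mathbf{x})\,d^2\mathbf{x},$$ and $\mathcal{F}^{f,g}\{h\}=\mathcal{F}^{f,g}_{+}\{h\}+\mathcal{F}^{f,g}_{-}\{h\}$.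
   Context: $\mathbb{H}$ is the real quaternion algebra with units $i,j,k$, $i^2=j^2=k^2=ijk=-1$. A pure quaternion has zero scalar part; a pure unit quaternion $f$ satisfies $f^2=-1$. $\mathbf{x}=(x_1,x_2)\in\mathbb{R}^2$, $d^2\mathbf{x}=dx_1dx_2$, and for a pure unit quaternion $f$ and real $\alpha$, $e^{\alpha f}=\cos\alpha+f\sin\alpha$. *)

(* Defs.v *)
From HB Require Import structures.
From mathcomp Require Import all_boot all_order all_algebra.
From mathcomp Require Import all_classical all_reals all_analysis.
Set Implicit Arguments. Unset Strict Implicit. Unset Printing Implicit Defensive.
Import Order.TTheory GRing.Theory Num.Theory.
Local Open Scope ring_scope.

(* Real quaternions a + b i + c j + d k, as 4 real coordinates. *)
Record quat (R : realType) := Quat { q0 : R; q1 : R; q2 : R; q3 : R }.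
Arguments Quat {R}.

Section Quat.
Variable R : realType.
Implicit Types p q : quat R.

Definition qadd p q := Quat (q0 p + q0 q) (q1 p + q1 q) (q2 p + q2 q) (q3 p + q3 q).
Definition qopp q := Quat (- q0 q) (- q1 q) (- q2 q) (- q3 q).
Definition qscale (a : R) q := Quat (a * q0 q) (a * q1 q) (a * q2 q) (a * q3 q).
Definition qzero : quat R := Quat 0 0 0 0.
Definition qone : quat R := Quat 1 0 0 0.
(* Hamilton product, with i^2 = j^2 = k^2 = ijk = -1. *)
Definition qmul p q :=
  Quat (q0 p * q0 q - q1 p * q1 q - q2 p * q2 q - q3 p * q3 q)
       (q0 p * q1 q + q1 p * q0 q + q2 p * q3 q - q3 p * q2 q)
       (q0 p * q2 q - q1 p * q3 q + q2 p * q0 q + q3 p * q1 q)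
       (q0 p * q3 q + q1 p * q2 q - q2 p * q1 q + q3 p * q0 q).

Definition pure_unit q := q0 q = 0 /\ qmul q q = qopp qone.

Definition qlin_indep p q :=
  forall a b : R, qadd (qscale a p) (qscale b q) = qzero -> a = 0 /\ b = 0.

Definition qexp (alpha : R) f := qadd (qscale (cos alpha) qone) (qscale (sin alpha) f).

Definition leb2 := ((@lebesgue_measure R) \x (@lebesgue_measure R))%E.

Definition qL1 (h : R * R -> quat R) :=
  [/\ leb2.-integrable setT (fun x => (q0 (h x))%:E),
      leb2.-integrable setT (fun x => (q1 (h x))%:E),
      leb2.-integrable setT (fun x => (q2 (h x))%:E) &
      leb2.-integrable setT (fun x => (q3 (h x))%:E)].

Definition qint (u : R * R -> quat R) : quat R :=
  Quat (Rintegral leb2 setT (fun x => q0 (u x)))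
       (Rintegral leb2 setT (fun x => q1 (u x)))
       (Rintegral leb2 setT (fun x => q2 (u x)))
       (Rintegral leb2 setT (fun x => q3 (u x))).

Definition hsplit (s : R) f g (h : R * R -> quat R) (x : R * R) : quat R :=
  qscale (2^-1) (qadd (h x) (qscale s (qmul (qmul f (h x)) g))).

Definition QFT f g (h : R * R -> quat R) (w : R * R) : quat R :=
  qint (fun x => qmul (qmul (qexp (- (x.1 * w.1)) f) (h x)) (qexp (- (x.2 * w.2)) g)).

End Quat.

(* Main.v *)
Require Import Defs.
From HB Require Import structures.
From mathcomp Require Import all_boot all_order all_algebra.
From mathcomp Require Import all_classical all_reals all_analysis.
From mathcomp Require Import ring measurable_realfun.
Import Order.TTheory GRing.Theory Num.Theory.
Local Open Scope ring_scope.

Section S.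
Variable R : realType.
Implicit Types p q : quat R.

Lemma qext p q : q0 p = q0 q -> q1 p = q1 q -> q2 p = q2 q -> q3 p = q3 q -> p = q.
Proof. by case: p => ????; case: q => ???? /= -> -> -> ->. Qed.

Definition hs (f g X : quat R) s := qscale (2^-1) (qadd X (qscale s (qmul (qmul f X) g))).
Ltac qring := apply: qext; cbv beta iota delta [hs hsplit qexp qmul qadd qscale qopp qone q0 q1 q2 q3]; ring.

Lemma qmulA p q r : qmul (qmul p q) r = qmul p (qmul q r).
Proof. qring. Qed.

Lemma qexpD (g : quat R) c d : pure_unit g ->
  qmul (qexp c g) (qexp d g) = qexp (c + d) g.
Proof.
move=> [_ gg].
have -> : qmul (qexp c g) (qexp d g) = qadd (qscale (cos c * cos d) (qone R))
   (qadd (qscale (cos c * sin d + sin c * cos d) g) (qscale (sin c * sin d) (qmul g g))) by qring.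
rewrite gg /qexp cosD sinD; qring.
Qed.


Lemma keyc (f g X : quat R) s c : pure_unit f -> pure_unit g -> (s = 1 \/ s = -1) ->
  qmul f (qscale c (qadd X (qscale s (qmul (qmul f X) g)))) =
  qscale (- s) (qmul (qscale c (qadd X (qscale s (qmul (qmul f X) g)))) g).
Proof.
move=> [_ ff] [_ gg] Hs.
have E1 : qmul f (qscale c (qadd X (qscale s (qmul (qmul f X) g)))) = qscale c (qadd (qmul f X) (qscale s (qmul (qmul (qmul f f) X) g))).
  qring.
have E2 : qmul (qscale c (qadd X (qscale s (qmul (qmul f X) g)))) g = qscale c (qadd (qmul X g) (qscale s (qmul f (qmul X (qmul g g))))).
  qring.
rewrite E1 E2 ff gg; case: Hs => ->; qring.
Qed.

Lemma key (f g X : quat R) s : pure_unit f -> pure_unit g -> (s = 1 \/ s = -1) ->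
  qmul f (hs f g X s) = qscale (- s) (qmul (hs f g X s) g).
Proof. exact: keyc. Qed.

Lemma pw1 (f g X : quat R) s a b : pure_unit f -> pure_unit g -> (s = 1 \/ s = -1) ->
  qmul (qmul (qexp (- a) f) (hs f g X s)) (qexp (- b) g) =
  qmul (hs f g X s) (qexp (- (b - s * a)) g).
Proof.
move=> pf pg Hs; have K := key f g X s pf pg Hs.
move: (hs f g X s) K => H K.
have -> : qmul (qexp (- a) f) H = qadd (qscale (cos (- a)) H) (qscale (sin (- a)) (qmul f H)) by qring.
rewrite K.
have -> : qadd (qscale (cos (- a)) H) (qscale (sin (- a)) (qscale (- s) (qmul H g)))
   = qmul H (qexp (s * a) g) by case: Hs => ->; rewrite /qexp ?mul1r ?mulN1r ?cosN ?sinN; qring.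
rewrite qmulA qexpD //; congr (qmul H (qexp _ g)); ring.
Qed.

Lemma pw2 (f g X : quat R) s a b : pure_unit f -> pure_unit g -> (s = 1 \/ s = -1) ->
  qmul (qmul (qexp (- a) f) (hs f g X s)) (qexp (- b) g) =
  qmul (qexp (- (a - s * b)) f) (hs f g X s).
Proof.
move=> pf pg Hs; have K := key f g X s pf pg Hs.
move: (hs f g X s) K => H K.
have K' : qmul H g = qscale (- s) (qmul f H) by rewrite K; case: Hs => ->; qring.
rewrite qmulA.
have -> : qmul H (qexp (- b) g) = qadd (qscale (cos (- b)) H) (qscale (sin (- b)) (qmul H g)) by qring.
rewrite K'.
have -> : qadd (qscale (cos (- b)) H) (qscale (sin (- b)) (qscale (- s) (qmul f H)))
   = qmul (qexp (s * b) f) H by case: Hs => ->; rewrite /qexp ?mul1r ?mulN1r ?cosN ?sinN; qring.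
rewrite -qmulA qexpD //; congr (qmul (qexp _ f) H); ring.
Qed.

Lemma pw3 (f g X A B : quat R) :
  qmul (qmul A X) B = qadd (qmul (qmul A (hs f g X 1)) B) (qmul (qmul A (hs f g X (-1))) B).
Proof.
have E : X = qadd (hs f g X 1) (hs f g X (-1)).
  apply: qext; cbv beta iota delta [hs hsplit qexp qmul qadd qscale qopp qone q0 q1 q2 q3]; field; rewrite ?pnatr_eq0 //.
have -> : qmul (qmul A X) B = qmul (qmul A (qadd (hs f g X 1) (hs f g X (-1)))) B by rewrite -E.
move: (hs f g X 1) (hs f g X (-1)) => P Q; qring.
Qed.


Definition ri (u : R * R -> R) := (@leb2 R).-integrable setT (EFin \o u).
Local Notation LT := (measurableTypeR R * measurableTypeR R)%type.
Definition bm (r : R * R -> R) := measurable_fun (T := LT) (U := R) setT r /\ exists M, forall x, `|r x| <= M.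

Lemma ri_add u v : ri u -> ri v -> ri (fun x => u x + v x).
Proof.
move=> iu iv; apply: eq_integrable (integrableD _ iu iv) => //.
all: try by move=> x _ /=; rewrite EFinD.
Qed.

Lemma ri_sub u v : ri u -> ri v -> ri (fun x => u x - v x).
Proof.
move=> iu iv; apply: eq_integrable (integrableB _ iu iv) => //.
all: try by move=> x _ /=; rewrite EFinB.
Qed.

Lemma ri_scale k u : ri u -> ri (fun x => k * u x).
Proof.
move=> iu; apply: eq_integrable (integrableZl _ k iu) => //.
all: try by move=> x _ /=; rewrite EFinM.
Qed.

Lemma bm_bounded r : bm r -> [bounded r x | x in setT].
Proof.
move=> [_ [M HM]]; exists M; split; first exact: num_real.
by move=> y /ltW My x _; exact: le_trans (HM x) My.
Qed.

Lemma ri_mull c u : bm c -> ri u -> ri (fun x => c x * u x).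
Proof.
move=> bc iu; have H := integrableMr measurableT bc.1 (bm_bounded _ bc) iu.
apply: eq_integrable H => //.
all: try by move=> x _ /=; rewrite EFinM.
Qed.

Lemma ri_mulr c u : bm c -> ri u -> ri (fun x => u x * c x).
Proof.
move=> bc iu; apply: eq_integrable (ri_mull _ _ bc iu) => //.
all: try by move=> x _ /=; rewrite mulrC.
Qed.


Lemma absc y : `|cos y| <= 1 :> R.
Proof. by rewrite ler_norml cos_geN1 cos_le1. Qed.
Lemma abss y : `|sin y| <= 1 :> R.
Proof. by rewrite ler_norml sin_geN1 sin_le1. Qed.

Lemma bm_trig (t : LT -> R) k1 k2 : measurable_fun setT t ->
  bm (fun x => cos (t x) * k1 + sin (t x) * k2).
Proof.
move=> mt; split.
  apply: measurable_funD; apply: measurable_funM; try exact: measurable_cst.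
    apply: (measurableT_comp (f := cos) (g := t)) => //.
    apply: continuous_measurable_fun; exact: continuous_cos.
  apply: (measurableT_comp (f := sin) (g := t)) => //.
  apply: continuous_measurable_fun; exact: continuous_sin.
exists (`|k1| + `|k2|) => x.
rewrite (le_trans (ler_normD _ _)) // lerD // normrM ler_piMl //.
- exact: absc.
- exact: abss.
Qed.

Lemma bm_cst k : bm (fun _ => k).
Proof. by split; [exact: measurable_cst | exists `|k|]. Qed.

Lemma mt1 (a : R) : measurable_fun (T := LT) (U := R) setT (fun x => - (x.1 * a)).
Proof.
apply: measurable_funN; apply: measurable_funM; last exact: measurable_cst.
exact: measurable_fst.
Qed.

Lemma mt2 (a : R) : measurable_fun (T := LT) (U := R) setT (fun x => - (x.2 * a)).
Proof.
apply: measurable_funN; apply: measurable_funM; last exact: measurable_cst.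
exact: measurable_snd.
Qed.

Definition qbm (c : R * R -> quat R) := [/\ bm (fun x => q0 (c x)), bm (fun x => q1 (c x)),
  bm (fun x => q2 (c x)) & bm (fun x => q3 (c x))].
Definition qok (c : R * R -> quat R) := [/\ ri (fun x => q0 (c x)), ri (fun x => q1 (c x)),
  ri (fun x => q2 (c x)) & ri (fun x => q3 (c x))].

Lemma qbm_cst c : qbm (fun _ => c).
Proof. by split; exact: bm_cst. Qed.

Lemma qbm_exp (t : LT -> R) f : measurable_fun setT t -> qbm (fun x => qexp (t x) f).
Proof. by move=> mt; split; exact: (bm_trig t _ _ mt). Qed.

Lemma qok_add u v : qok u -> qok v -> qok (fun x => qadd (u x) (v x)).
Proof. by case=> ????; case=> ????; split; apply: ri_add. Qed.

Lemma qok_scale k u : qok u -> qok (fun x => qscale k (u x)).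
Proof. by case=> ????; split; apply: ri_scale. Qed.

Lemma qok_mull c u : qbm c -> qok u -> qok (fun x => qmul (c x) (u x)).
Proof.
case=> b0 b1 b2 b3; case=> i0 i1 i2 i3; split;
  repeat first [apply: ri_sub | apply: ri_add | apply: ri_mull]; assumption.
Qed.

Lemma qok_mulr c u : qbm c -> qok u -> qok (fun x => qmul (u x) (c x)).
Proof.
case=> b0 b1 b2 b3; case=> i0 i1 i2 i3; split;
  repeat first [apply: ri_sub | apply: ri_add | apply: ri_mulr]; assumption.
Qed.

Lemma qint_add u v : qok u -> qok v -> qint (fun x => qadd (u x) (v x)) = qadd (qint u) (qint v).
Proof.
case=> i0 i1 i2 i3; case=> j0 j1 j2 j3.
by apply: qext; apply: RintegralD.
Qed.

End S.

Theorem theorem2 (R : realType) (f g : quat R) (h : R * R -> quat R) :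
  pure_unit f -> pure_unit g -> qlin_indep f g -> qL1 h ->
  (forall (s : R), (s = 1 \/ s = -1) -> forall w : R * R,
     QFT f g (hsplit s f g h) w =
       qint (fun x => qmul (hsplit s f g h x)
                            (qexp (- (x.2 * w.2 - s * (x.1 * w.1))) g))
  /\ QFT f g (hsplit s f g h) w =
       qint (fun x => qmul (qexp (- (x.1 * w.1 - s * (x.2 * w.2))) f)
                            (hsplit s f g h x)))
  /\ (forall w : R * R,
        QFT f g h w = qadd (QFT f g (hsplit 1 f g h) w) (QFT f g (hsplit (-1) f g h) w)).
Proof.
move=> pf pg _ [h0 h1 h2 h3].
have hok : qok R h by split.
have hsok : forall s, qok R (hsplit s f g h).
  move=> s; rewrite /hsplit; apply: qok_scale; apply: qok_add => //; apply: qok_scale.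
  apply: (qok_mulr _ (fun _ => g)); first exact: qbm_cst.
  apply: (qok_mull _ (fun _ => f)) => //; exact: qbm_cst.
have intok : forall u (w : R * R), qok R u -> qok R (fun x =>
    qmul (qmul (qexp (- (x.1 * w.1)) f) (u x)) (qexp (- (x.2 * w.2)) g)).
  move=> u w hu; apply: qok_mulr; first exact: qbm_exp (mt2 _ _).
  apply: qok_mull => //; exact: qbm_exp (mt1 _ _).
split.
- move=> s Hs w; split; rewrite /QFT; congr qint; apply: funext => x.
  + exact: (pw1 R f g (h x) s (x.1 * w.1) (x.2 * w.2) pf pg Hs).
  + exact: (pw2 R f g (h x) s (x.1 * w.1) (x.2 * w.2) pf pg Hs).
- move=> w; rewrite /QFT -qint_add; [|exact: intok|exact: intok].
  congr qint; apply: funext => x; exact: pw3.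
Qed.
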